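(* If $A$ is a pc monoid, then its seminormalization $A\to A_{\mathrm{sn}}$ exists and $A_{\mathrm{sn}}$ is also a pc monoid; if $A$ is pctf then so is $A_{\mathrm{sn}}$. Moreover, there is a functor $(-)_{\mathrm{sn}}$ from the category of pc monoids to the category of seminormal pc monoids sending a monoid to its seminormalization, and the maps $A\to A_{\mathrm{sn}}$ form a natural transformation from the identity to $(-)_{\mathrm{sn}}$.
   Context: A monoid is a pointed commutative monoid; morphisms preserve $0$, $1$ and multiplication. pc: isomorphic to $C/I$ with $C$ cancellative ($ac=bc,c\ne0\Rightarrow a=b$) and $I$ an ideal; pctf: the same with $C$ also torsionfree ($a^n=b^n$ for some $n\ge1\Rightarrow a=b$). $A$ is reduced if $a^2=b^2$ and $a^3=b^3$ imply $a=b$; $A_{\mathrm{red}}$ is $A$ modulo the congruence $a\sim b$ iff $a^n=b^n$ for all $n\gg0$. $A$ is seminormal if reduced and whenever $x^3=y^2$ there is $z\in A$ with $x=z^2$, $y=z^3$. A seminormalization of $A$ is a monoid map $A\to B$ with $B$ seminormal such that the induced $A_{\mathrm{red}}\to B$ is injective and for every $b\in B$, $b^n$ lies in (the image of) $A_{\mathrm{red}}$ for all $n\gg0$. *)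

(* Defs.v *)
From Stdlib Require Import Arith.

Record pcmon := PCMon {
  car :> Type;
  mul : car -> car -> car;
  one : car;
  zero : car;
  mulA : forall x y z, mul x (mul y z) = mul (mul x y) z;
  mulC : forall x y, mul x y = mul y x;
  mul1x : forall x, mul one x = x;
  mul0x : forall x, mul zero x = zero
}.

Arguments mul {_} _ _.
Arguments one {_}.
Arguments zero {_}.

Fixpoint pw {A : pcmon} (x : A) (n : nat) : A :=
  match n with
  | O => one
  | S k => mul x (pw x k)
  end.

Record hom (A B : pcmon) := Hom {
  hfun :> A -> B;
  hom0 : hfun zero = zero;
  hom1 : hfun one = one;
  homM : forall x y, hfun (mul x y) = mul (hfun x) (hfun y)
}.

Arguments hfun {A B} _ _.

Definition cancellative (C : pcmon) : Prop :=
  forall a b c : C, mul a c = mul b c -> c <> zero -> a = b.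

Definition torsionfree (C : pcmon) : Prop :=
  forall (a b : C) (n : nat), 1 <= n -> pw a n = pw b n -> a = b.

Definition is_ideal (C : pcmon) (I : C -> Prop) : Prop :=
  I zero /\ forall x y : C, I x -> I (mul x y).

(** [rees_iso C I p]: the morphism p : C -> A induces an isomorphism
    C/I ~= A, where C/I is the Rees quotient (all elements of I collapsed
    to 0): p is surjective and p x = p y iff x = y or both lie in I. *)
Definition rees_iso (C : pcmon) (I : C -> Prop) (A : pcmon) (p : hom C A) : Prop :=
  (forall a : A, exists x : C, p x = a) /\
  (forall x y : C, p x = p y <-> (x = y \/ (I x /\ I y))).

Definition is_pc (A : pcmon) : Prop :=
  exists (C : pcmon) (I : C -> Prop) (p : hom C A),
    cancellative C /\ is_ideal C I /\ rees_iso C I A p.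

Definition is_pctf (A : pcmon) : Prop :=
  exists (C : pcmon) (I : C -> Prop) (p : hom C A),
    cancellative C /\ torsionfree C /\ is_ideal C I /\ rees_iso C I A p.

Definition reduced (A : pcmon) : Prop :=
  forall a b : A, pw a 2 = pw b 2 -> pw a 3 = pw b 3 -> a = b.

(** The congruence defining A_red: a^n = b^n for all n >> 0. *)
Definition red_equiv {A : pcmon} (a b : A) : Prop :=
  exists N : nat, forall n, N <= n -> pw a n = pw b n.

Definition seminormal (A : pcmon) : Prop :=
  reduced A /\
  forall x y : A, pw x 3 = pw y 2 -> exists z : A, x = pw z 2 /\ y = pw z 3.

(** f : A -> B is a seminormalization: B seminormal; f factors through
    A_red (f a = f b whenever a ~ b) and the induced map A_red -> B is
    injective (f a = f b -> a ~ b); every b in B has b^n in the image of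
    A_red (= image of f) for all n >> 0. *)
Definition is_seminormalization {A B : pcmon} (f : hom A B) : Prop :=
  seminormal B /\
  (forall a b : A, f a = f b <-> red_equiv a b) /\
  (forall b : B, exists N : nat, forall n, N <= n -> exists a : A, f a = pw b n).

(* Main.v *)
Require Import Defs.
From Stdlib Require Import Arith Lia Classical ClassicalEpsilon FunctionalExtensionality PropExtensionality ProofIrrelevance.

Lemma mulx1 {M : pcmon} (x : M) : mul x one = x.
Proof. rewrite mulC; apply mul1x. Qed.
Lemma mulx0 {M : pcmon} (x : M) : mul x zero = zero.
Proof. rewrite mulC; apply mul0x. Qed.
Lemma mul4 {M : pcmon} (a b c d : M) : mul (mul a b) (mul c d) = mul (mul a c) (mul b d).
Proof.
  rewrite <- !mulA. f_equal. rewrite !mulA. f_equal. apply mulC.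
Qed.
Lemma pw_add {M : pcmon} (a : M) m n : pw a (m+n) = mul (pw a m) (pw a n).
Proof. induction m; simpl. now rewrite mul1x. now rewrite IHm, mulA. Qed.
Lemma pw_mul {M : pcmon} (a b : M) n : pw (mul a b) n = mul (pw a n) (pw b n).
Proof. induction n; simpl. now rewrite mul1x. now rewrite IHn, mul4. Qed.
Lemma pw_one {M : pcmon} n : pw (@one M) n = one.
Proof. induction n; simpl; auto. now rewrite IHn, mul1x. Qed.
Lemma pw_zero {M : pcmon} n : 1 <= n -> pw (@zero M) n = zero.
Proof. destruct n; simpl; intros. lia. apply mul0x. Qed.
Lemma hom_pw {A B : pcmon} (f : hom A B) a n : f (pw a n) = pw (f a) n.
Proof. induction n; simpl. apply hom1. now rewrite homM, IHn. Qed.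
Lemma hom_I {C A : pcmon} (I : C -> Prop) (p : hom C A) :
  is_ideal C I -> rees_iso C I A p -> forall x, I x -> p x = zero.
Proof.
  intros [I0 _] [_ R] x Ix. rewrite <- (hom0 _ _ p). apply R. right; auto.
Qed.

Lemma mult_pw {M : pcmon} (s : nat -> M) N :
  (forall m n, N <= m -> N <= n -> s (m+n) = mul (s m) (s n)) ->
  forall n k, N <= n -> 1 <= k -> s (k*n) = pw (s n) k.
Proof.
  intros H n k Hn Hk. induction k as [|k IH]. lia.
  destruct k. simpl. now rewrite Nat.add_0_r, mulx1.
  change (S (S k) * n) with (n + S k * n).
  rewrite H by nia. rewrite IH by lia. reflexivity.
Qed.

Lemma decomp (L n : nat) : exists p : nat * nat,
  8*L+3 <= n -> L <= fst p /\ L <= snd p /\ n = 3 * fst p + 2 * snd p.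
Proof.
  destruct (Nat.Even_or_Odd n) as [[m Hm]|[m Hm]].
  - exists (2*L, m - 3*L). simpl; lia.
  - exists (2*L+1, m - 3*L - 1). simpl; lia.
Qed.

Definition ismult {M : pcmon} (s : nat -> M) : Prop :=
  exists N, forall m n, N <= m -> N <= n -> s (m+n) = mul (s m) (s n).
Definition eveq {M : pcmon} (s t : nat -> M) : Prop :=
  exists N, forall n, N <= n -> s n = t n.

Lemma eveq_refl {M : pcmon} (s : nat -> M) : eveq s s.
Proof. exists 0; auto. Qed.
Lemma eveq_sym {M : pcmon} (s t : nat -> M) : eveq s t -> eveq t s.
Proof. intros [N H]; exists N; intros; symmetry; auto. Qed.
Lemma eveq_trans {M : pcmon} (s t u : nat -> M) : eveq s t -> eveq t u -> eveq s u.
Proof. intros [N H] [N' H']; exists (N+N'); intros. rewrite H, H'; auto; lia. Qed.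
Lemma eveq_pt {M : pcmon} (s t : nat -> M) : (forall n, s n = t n) -> eveq s t.
Proof. intros H; exists 0; auto. Qed.

Definition MS (M : pcmon) := {s : nat -> M | ismult s}.
Definition Req {M : pcmon} (x y : MS M) : Prop := eveq (proj1_sig x) (proj1_sig y).
Definition QS (M : pcmon) := {P : MS M -> Prop | exists x, P = Req x}.
Definition cls {M : pcmon} (x : MS M) : QS M := exist _ (Req x) (ex_intro _ x eq_refl).

Lemma QS_ext {M : pcmon} (q1 q2 : QS M) : proj1_sig q1 = proj1_sig q2 -> q1 = q2.
Proof.
  destruct q1 as [P1 H1], q2 as [P2 H2]; simpl; intros E; subst.
  f_equal; apply proof_irrelevance.
Qed.

Lemma cls_eq {M : pcmon} (x y : MS M) : cls x = cls y <-> Req x y.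
Proof.
  split.
  - intros E. apply (f_equal (@proj1_sig _ _)) in E. simpl in E.
    assert (Req x x) by apply eveq_refl. rewrite E in H. now apply eveq_sym.
  - intros E. apply QS_ext; simpl. apply functional_extensionality; intros z.
    apply propositional_extensionality; split; intros H.
    + apply eveq_trans with (proj1_sig x); auto. now apply eveq_sym.
    + now apply eveq_trans with (proj1_sig y).
Qed.

Definition rep {M : pcmon} (q : QS M) : MS M :=
  proj1_sig (constructive_indefinite_description _ (proj2_sig q)).

Lemma cls_rep {M : pcmon} (q : QS M) : cls (rep q) = q.
Proof.
  apply QS_ext; simpl. unfold rep.
  destruct (constructive_indefinite_description _ (proj2_sig q)); simpl; auto.
Qed.

Lemma QS_ind {M : pcmon} (P : QS M -> Prop) : (forall x, P (cls x)) -> forall q, P q.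
Proof. intros H q. rewrite <- (cls_rep q). apply H. Qed.

Lemma rep_cls {M : pcmon} (x : MS M) : Req (rep (cls x)) x.
Proof. apply cls_eq. apply cls_rep. Qed.
Lemma ismult_mul {M : pcmon} (s t : nat -> M) : ismult s -> ismult t ->
  ismult (fun n => mul (s n) (t n)).
Proof.
  intros [N H] [N' H']; exists (N+N'); intros m n Hm Hn.
  rewrite H, H' by lia. apply mul4.
Qed.
Lemma ismult_const {M : pcmon} (c : M) : mul c c = c -> ismult (fun _ => c).
Proof. intros H; exists 0; auto. Qed.
Lemma ismult_pow {M : pcmon} (a : M) : ismult (fun n => pw a n).
Proof. exists 0; intros; apply pw_add. Qed.
Lemma ismult_pwseq {M : pcmon} (s : nat -> M) k : ismult s -> ismult (fun n => pw (s n) k).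
Proof. intros [N H]; exists N; intros. rewrite H by auto. apply pw_mul. Qed.
Lemma ismult_map {A B : pcmon} (f : hom A B) (s : nat -> A) : ismult s -> ismult (fun n => f (s n)).
Proof. intros [N H]; exists N; intros. rewrite H by auto. apply homM. Qed.

Definition smul {M : pcmon} (x y : MS M) : MS M :=
  exist _ _ (ismult_mul _ _ (proj2_sig x) (proj2_sig y)).
Definition sone (M : pcmon) : MS M := exist _ _ (ismult_const (@one M) (mul1x _ _)).
Definition szero (M : pcmon) : MS M := exist _ _ (ismult_const (@zero M) (mul0x _ _)).
Definition spow {M : pcmon} (a : M) : MS M := exist _ _ (ismult_pow a).
Definition spw {M : pcmon} (x : MS M) k : MS M := exist _ _ (ismult_pwseq _ k (proj2_sig x)).
Definition smap {A B : pcmon} (f : hom A B) (x : MS A) : MS B :=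
  exist _ _ (ismult_map f _ (proj2_sig x)).

Definition qmul {M : pcmon} (q1 q2 : QS M) : QS M := cls (smul (rep q1) (rep q2)).

Lemma qmul_cls {M : pcmon} (x y : MS M) : qmul (cls x) (cls y) = cls (smul x y).
Proof.
  unfold qmul. apply cls_eq.
  destruct (rep_cls x) as [N H], (rep_cls y) as [N' H'].
  exists (N+N'); intros n Hn; simpl. rewrite H, H' by lia. auto.
Qed.

Ltac qind q := pattern q; apply QS_ind; clear q; intro q.

Definition Sn (M : pcmon) : pcmon.
Proof.
  refine (@PCMon (QS M) qmul (cls (sone M)) (cls (szero M)) _ _ _ _).
  - intros x y z; qind x; qind y; qind z. rewrite !qmul_cls. apply cls_eq.
    apply eveq_pt; intros; simpl; apply mulA.
  - intros x y; qind x; qind y. rewrite !qmul_cls. apply cls_eq.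
    apply eveq_pt; intros; simpl; apply mulC.
  - intros x; qind x. rewrite !qmul_cls. apply cls_eq.
    apply eveq_pt; intros; simpl; apply mul1x.
  - intros x; qind x. rewrite !qmul_cls. apply cls_eq.
    apply eveq_pt; intros; simpl; apply mul0x.
Defined.

Lemma Sn_mul {M : pcmon} (x y : MS M) : @mul (Sn M) (cls x) (cls y) = cls (smul x y).
Proof. apply qmul_cls. Qed.

Lemma Sn_pw {M : pcmon} (x : MS M) k : @pw (Sn M) (cls x) k = cls (spw x k).
Proof.
  induction k; simpl.
  - apply cls_eq, eveq_pt; intros; reflexivity.
  - change (@mul (Sn M) (cls x) (@pw (Sn M) (cls x) k) = cls (spw x (S k))).
    rewrite IHk, Sn_mul. apply cls_eq, eveq_pt; intros; reflexivity.
Qed.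

Definition eta (A : pcmon) : hom A (Sn A).
Proof.
  refine {| hfun := fun a => (cls (spow a) : Sn A) |}.
  - apply cls_eq. exists 1; intros; simpl. apply pw_zero; auto.
  - apply cls_eq, eveq_pt; intros; simpl; apply pw_one.
  - intros x y. change (cls (spow (mul x y)) = @mul (Sn A) (cls (spow x)) (cls (spow y))).
    rewrite Sn_mul. apply cls_eq, eveq_pt; intros; simpl; apply pw_mul.
Defined.

Definition Smap (A B : pcmon) (f : hom A B) : hom (Sn A) (Sn B).
Proof.
  refine {| hfun := fun q : Sn A => (cls (smap f (rep q)) : Sn B) |}.
  - apply cls_eq. destruct (rep_cls (szero A)) as [N H]. exists N; intros; simpl.
    rewrite H by auto. apply hom0.
  - apply cls_eq. destruct (rep_cls (sone A)) as [N H]. exists N; intros; simpl.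
    rewrite H by auto. apply hom1.
  - intros x y. change (cls (smap f (rep (qmul x y))) = @mul (Sn B) (cls (smap f (rep x))) (cls (smap f (rep y)))).
    rewrite Sn_mul. qind x; qind y. rewrite qmul_cls. apply cls_eq.
    destruct (rep_cls (smul x y)) as [N H], (rep_cls x) as [N1 H1], (rep_cls y) as [N2 H2].
    exists (N+N1+N2); intros; simpl in *. rewrite H, H1, H2 by lia. apply homM.
Defined.

Lemma Smap_cls {A B : pcmon} (f : hom A B) (x : MS A) : Smap A B f (cls x) = cls (smap f x).
Proof.
  simpl. apply cls_eq. destruct (rep_cls x) as [N H]. exists N; intros; simpl.
  rewrite H by auto. reflexivity.
Qed.
Lemma reduced_Sn (M : pcmon) : reduced (Sn M).
Proof.
  intros a b. qind a. qind b. rewrite !Sn_pw. intros H2 H3.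
  apply cls_eq in H2. apply cls_eq in H3. apply cls_eq.
  destruct H2 as [K2 H2], H3 as [K3 H3].
  destruct (proj2_sig a) as [Na Ha], (proj2_sig b) as [Nb Hb].
  set (s := proj1_sig a) in *. set (t := proj1_sig b) in *.
  change (forall n, K2 <= n -> pw (s n) 2 = pw (t n) 2) in H2.
  change (forall n, K3 <= n -> pw (s n) 3 = pw (t n) 3) in H3.
  change (eveq s t).
  set (K := Na+Nb+K2+K3+1).
  exists (8*K+3). intros n Hn. destruct (decomp K n) as [[p q] Hd].
  destruct (Hd Hn) as [Hp [Hq E]]; cbn [fst snd] in *. subst n.
  rewrite Ha, Hb by lia.
  rewrite !(mult_pw s Na Ha), !(mult_pw t Nb Hb) by lia.
  rewrite H2, H3 by lia. reflexivity.
Qed.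

Definition zseq {M : pcmon} (s t : nat -> M) (L n : nat) : M :=
  let p := proj1_sig (constructive_indefinite_description _ (decomp L n)) in
  mul (t (fst p)) (s (snd p)).

Lemma zspec {M : pcmon} (s t : nat -> M) L n : 8*L+3 <= n ->
  exists a b, L <= a /\ L <= b /\ n = 3*a+2*b /\ zseq s t L n = mul (t a) (s b).
Proof.
  intros Hn. unfold zseq.
  destruct (constructive_indefinite_description _ (decomp L n)) as [[a b] H]; simpl.
  destruct (H Hn) as [? [? ?]]; simpl in *. exists a, b; auto.
Qed.

Lemma seminormal_Sn (M : pcmon) : seminormal (Sn M).
Proof.
  split. apply reduced_Sn.
  intros x y. qind x. qind y. rewrite !Sn_pw. intros H.
  apply cls_eq in H. destruct H as [K0 H].
  destruct (proj2_sig x) as [Ns Hs], (proj2_sig y) as [Nt Ht].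
  set (s := proj1_sig x) in *. set (t := proj1_sig y) in *.
  change (forall n, K0 <= n -> pw (s n) 3 = pw (t n) 2) in H.
  set (K := Ns+Nt+K0+1).
  assert (F : forall k, K <= k -> s (3*k) = t (2*k)).
  { intros k Hk. rewrite (mult_pw s Ns Hs), (mult_pw t Nt Ht) by lia. apply H. lia. }
  assert (Mv : forall u a b, K <= u -> K <= a -> K <= b ->
            mul (t (a + 2*u)) (s b) = mul (t a) (s (b + 3*u))).
  { intros u a b Hu Ha Hb. rewrite Ht, Hs by lia. rewrite <- F by lia.
    rewrite <- !mulA. f_equal. apply mulC. }
  assert (W1 : forall a b a' b', a' <= a -> 3*K <= a' -> 3*K <= b -> 3*K <= b' ->
            3*a+2*b = 3*a'+2*b' -> mul (t a) (s b) = mul (t a') (s b')).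
  { intros a b a' b' Hle Ha' Hb Hb' E.
    assert (exists v, a = a' + 2*v /\ b' = b + 3*v) as [v [Ea Eb]].
    { destruct (Nat.Even_or_Odd (a - a')) as [[v Hv]|[v Hv]].
      exists v; lia. lia. }
    set (c := a' - 2*K).
    replace a' with (c + 2*K) by lia. rewrite Mv by lia.
    replace a with (c + 2*(K+v)) by lia. rewrite Mv by lia.
    f_equal. f_equal. lia. }
  assert (W : forall a b a' b', 3*K <= a -> 3*K <= a' -> 3*K <= b -> 3*K <= b' ->
            3*a+2*b = 3*a'+2*b' -> mul (t a) (s b) = mul (t a') (s b')).
  { intros a b a' b' ? ? ? ? E. destruct (Nat.le_ge_cases a' a).
    apply W1; auto. symmetry; apply W1; auto. }
  set (L := 3*K).
  assert (Zm : ismult (zseq s t L)).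
  { exists (8*L+3). intros m n Hm Hn.
    destruct (zspec s t L m Hm) as [a1 [b1 [? [? [? E1]]]]].
    destruct (zspec s t L n Hn) as [a2 [b2 [? [? [? E2]]]]].
    destruct (zspec s t L (m+n)) as [a3 [b3 [? [? [? E3]]]]]. lia.
    rewrite E1, E2, E3, mul4, <- Ht, <- Hs by lia.
    apply W; unfold L in *; lia. }
  exists (cls (exist _ _ Zm)). rewrite !Sn_pw. split; apply cls_eq;
  exists (8*L+3); intros n Hn;
  [change (s n = pw (zseq s t L n) 2) | change (t n = pw (zseq s t L n) 3)];
  destruct (zspec s t L n Hn) as [a [b [? [? [En E]]]]]; rewrite E, pw_mul;
  rewrite <- (mult_pw s Ns Hs), <- (mult_pw t Nt Ht) by (unfold L in *; lia).
  - rewrite <- F by (unfold L in *; lia). rewrite <- Hs by (unfold L in *; lia).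
    f_equal; lia.
  - replace (3*b) with (2*b + b) by lia.
    replace (2*b + b) with (3*b) by lia.
    rewrite F by (unfold L in *; lia). rewrite <- Ht by (unfold L in *; lia).
    f_equal; lia.
Qed.
Lemma seminorm_eta (A : pcmon) : is_seminormalization (eta A).
Proof.
  split; [apply seminormal_Sn|split].
  - intros a b. change (cls (spow a) = cls (spow b) <-> red_equiv a b).
    rewrite cls_eq. reflexivity.
  - intros b. qind b. destruct (proj2_sig b) as [N H].
    set (s := proj1_sig b) in *.
    exists (N+1). intros n Hn. exists (s n).
    change (cls (spow (s n)) = @pw (Sn A) (cls b) n). rewrite Sn_pw.
    apply cls_eq. exists (N+1); intros k Hk.
    change (pw (s n) k = pw (s k) n). rewrite <- !(mult_pw s N H) by lia.
    f_equal; lia.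
Qed.

Lemma nz_ev {M : pcmon} (x : MS M) : cls x <> cls (szero M) ->
  exists N, (forall m n, N <= m -> N <= n -> proj1_sig x (m+n) = mul (proj1_sig x m) (proj1_sig x n))
    /\ forall k, N <= k -> proj1_sig x k <> zero.
Proof.
  intros Hc. destruct (proj2_sig x) as [N H]. exists N; split; auto.
  intros k Hk E. apply Hc. apply cls_eq. exists (k+N). intros n Hn.
  change (proj1_sig x n = zero). replace n with (k + (n-k)) by lia.
  rewrite H by lia. rewrite E; apply mul0x.
Qed.

Lemma pc_Sn (C A : pcmon) (I : C -> Prop) (p : hom C A) :
  cancellative C -> is_ideal C I -> rees_iso C I A p ->
  cancellative (Sn C) /\ is_ideal (Sn C) (fun q => Smap C A p q = zero) /\
  rees_iso (Sn C) (fun q => Smap C A p q = zero) (Sn A) (Smap C A p).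
Proof.
  intros HC Hi Hr. pose proof (hom_I I p Hi Hr) as HI.
  destruct Hr as [Hs Hr].
  split; [|split; [|split]].
  - intros a b c. qind a. qind b. qind c. rewrite !Sn_mul. intros E Hc.
    apply cls_eq in E. destruct (nz_ev c Hc) as [Nc [_ Hnz]].
    destruct E as [K E]. apply cls_eq; exists (K+Nc); intros n Hn.
    apply (HC _ _ (proj1_sig c n)); [exact (E n ltac:(lia)) | apply Hnz; lia].
  - split. apply hom0. intros x y Hx. rewrite homM, Hx. apply mul0x.
  - intros q; qind q. destruct (classic (cls q = cls (szero A))) as [E|NE].
    + exists zero. rewrite hom0. symmetry; exact E.
    + destruct (nz_ev q NE) as [N [Hm Hnz]].
      assert (exists g : A -> C, forall a, p (g a) = a) as [g Hg].
      { exists (fun a => proj1_sig (constructive_indefinite_description _ (Hs a))).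
        intro a. exact (proj2_sig (constructive_indefinite_description _ (Hs a))). }
      set (s := proj1_sig q) in *.
      assert (Hw : ismult (fun n => g (s n))).
      { exists N; intros m n Hm' Hn'.
        assert (E : p (g (s (m+n))) = p (mul (g (s m)) (g (s n)))).
        { rewrite homM, !Hg. apply Hm; auto. }
        destruct (proj1 (Hr _ _) E) as [E'|[I1 _]]; auto.
        exfalso; apply (Hnz (m+n)); [lia|]. rewrite <- (Hg (s (m+n))). apply HI; auto. }
      exists (cls (exist _ _ Hw)). rewrite Smap_cls. apply cls_eq, eveq_pt; intros n.
      change (p (g (s n)) = s n). apply Hg.
  - intros a b; split.
    + intros E. destruct (classic (Smap C A p a = zero)) as [Z|NZ].
      * right; split; auto. rewrite <- E; auto.
      * left. revert E NZ. qind a. qind b. rewrite !Smap_cls. intros E NZ.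
        destruct (nz_ev _ NZ) as [N [_ Hnz]].
        apply cls_eq in E; destruct E as [K E]. apply cls_eq; exists (N+K); intros n Hn.
        destruct (proj1 (Hr _ _) (E n ltac:(lia))) as [E'|[I1 _]]; auto.
        exfalso; apply (Hnz n); [lia|]. exact (HI _ I1).
    + intros [E|[Z1 Z2]]. subst; auto. rewrite Z1, Z2; auto.
Qed.

Lemma tf_Sn (C : pcmon) : torsionfree C -> torsionfree (Sn C).
Proof.
  intros HT a b n Hn. qind a. qind b. rewrite !Sn_pw. intro E.
  apply cls_eq in E; destruct E as [K E]; apply cls_eq; exists K; intros k Hk.
  eapply HT; [exact Hn | exact (E k Hk)].
Qed.

Theorem proposition1p15 :
  exists (Sn : pcmon -> pcmon)
         (eta : forall A : pcmon, hom A (Sn A))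
         (Smap : forall A B : pcmon, hom A B -> hom (Sn A) (Sn B)),
    (* object part: seminormalization, pc, seminormal, pctf preserved *)
    (forall A : pcmon, is_pc A ->
       is_seminormalization (eta A) /\ is_pc (Sn A) /\ seminormal (Sn A) /\
       (is_pctf A -> is_pctf (Sn A))) /\
    (* functoriality on the category of pc monoids *)
    (forall (A : pcmon), is_pc A ->
       forall h : hom A A, (forall a, h a = a) ->
       forall x : Sn A, Smap A A h x = x) /\
    (forall (A B C : pcmon) (f : hom A B) (g : hom B C),
       is_pc A -> is_pc B -> is_pc C ->
       forall (h : hom A C), (forall a, h a = g (f a)) ->
       forall x : Sn A, Smap A C h x = Smap B C g (Smap A B f x)) /\
    (* naturality of eta : id => Sn *)
    (forall (A B : pcmon) (f : hom A B), is_pc A -> is_pc B ->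
       forall a : A, Smap A B f (eta A a) = eta B (f a)).
Proof.
  exists Sn, eta, Smap. split; [|split; [|split]].
  - intros A HA. split; [apply seminorm_eta|]. split; [|split; [apply seminormal_Sn|]].
    + destruct HA as [C [I [p [Hc [Hi Hr]]]]].
      destruct (pc_Sn C A I p Hc Hi Hr) as [X [Y Z]].
      exists (Sn C), (fun q : Sn C => Smap C A p q = zero), (Smap C A p); auto.
    + intros [C [I [p [Hc [Ht [Hi Hr]]]]]].
      destruct (pc_Sn C A I p Hc Hi Hr) as [X [Y Z]].
      exists (Sn C), (fun q : Sn C => Smap C A p q = zero), (Smap C A p); split; auto. split; auto. apply tf_Sn; auto.
  - intros A _ h Hh x. qind x. rewrite Smap_cls. apply cls_eq, eveq_pt; intros n.
    change (h (proj1_sig x n) = proj1_sig x n). apply Hh.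
  - intros A B C f g _ _ _ h Hh x. qind x. rewrite !Smap_cls.
    apply cls_eq, eveq_pt; intros n.
    change (h (proj1_sig x n) = g (f (proj1_sig x n))). apply Hh.
  - intros A B f _ _ a. change (Smap A B f (cls (spow a)) = cls (spow (f a))).
    rewrite Smap_cls. apply cls_eq, eveq_pt; intros n. apply hom_pw.
Qed.
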